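(* Let $E$ be a dark minimal ceer, and let $R$ be an arbitrary equivalence relation on $\omega$ such that $R$ has infinitely many equivalence classes and $R\supseteq E$. Then $R$ is minimal.
   Context: All equivalence relations have domain $\omega$. For equivalence relations $R,S$, $R\leq_c S$ means there is a computable function $f$ with $xRy\Leftrightarrow f(x)Sf(y)$ for all $x,y$; $R\equiv_c S$ means $R\leq_c S$ and $S\leq_c R$. $\mathrm{Id}$ is the identity relation on $\omega$, and for $n\geq1$, $\mathrm{Id}_n$ is the relation $x\,\mathrm{Id}_n\,y\Leftrightarrow n\mid(x-y)$. A ceer is a computably enumerable equivalence relation. A ceer is dark if it is $\leq_c$-incomparable with $\mathrm{Id}$. An equivalence relation $R$ is minimal if it has infinitely many classes and for every equivalence relation $S$, $S\leq_c R$ implies $S\equiv_c R$ or $S\equiv_c\mathrm{Id}_n$ for some $n$. *)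

(* Defs.v *)
(* Computability is modelled by (arity-free) mu-recursive
   function codes with a big-step partial evaluation relation. *)
From Stdlib Require Import List Arith.
Import ListNotations.

Inductive code : Type :=
| CZero : code
| CSucc : code
| CProj : nat -> code
| CComp : code -> list code -> code
| CPrim : code -> code -> code
| CMu   : code -> code.

Inductive eval : code -> list nat -> nat -> Prop :=
| ev_zero : forall v, eval CZero v 0
| ev_succ : forall v, eval CSucc v (S (hd 0 v))
| ev_proj : forall i v, eval (CProj i) v (nth i v 0)
| ev_comp : forall f gs v ws y,
    evals gs v ws -> eval f ws y -> eval (CComp f gs) v y
| ev_prim0 : forall f g v y, eval f v y -> eval (CPrim f g) (0 :: v) y
| ev_primS : forall f g n v z y,
    eval (CPrim f g) (n :: v) z -> eval g (n :: z :: v) y ->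
    eval (CPrim f g) (S n :: v) y
| ev_mu : forall f v n,
    eval f (n :: v) 0 ->
    (forall m, m < n -> exists k, eval f (m :: v) (S k)) ->
    eval (CMu f) v n
with evals : list code -> list nat -> list nat -> Prop :=
| evs_nil : forall v, evals [] v []
| evs_cons : forall g gs v w ws,
    eval g v w -> evals gs v ws -> evals (g :: gs) v (w :: ws).

Definition computable (f : nat -> nat) : Prop :=
  exists c, forall x, eval c [x] (f x).

Definition ce_rel (P : nat -> nat -> Prop) : Prop :=
  exists c, forall x y, P x y <-> exists z, eval c [x; y] z.

Definition equiv_rel (R : nat -> nat -> Prop) : Prop :=
  (forall x, R x x) /\ (forall x y, R x y -> R y x) /\
  (forall x y z, R x y -> R y z -> R x z).

Definition ceer (R : nat -> nat -> Prop) : Prop := equiv_rel R /\ ce_rel R.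

Definition creduces (R S : nat -> nat -> Prop) : Prop :=
  exists f, computable f /\ forall x y, R x y <-> S (f x) (f y).

Definition cequiv (R S : nat -> nat -> Prop) : Prop :=
  creduces R S /\ creduces S R.

Definition Id : nat -> nat -> Prop := fun x y => x = y.

Definition Idn (n : nat) : nat -> nat -> Prop :=
  fun x y => x mod n = y mod n.

Definition inf_classes (R : nat -> nat -> Prop) : Prop :=
  forall n, exists f : nat -> nat,
    forall i j, i < n -> j < n -> R (f i) (f j) -> i = j.

Definition dark (R : nat -> nat -> Prop) : Prop :=
  ~ creduces R Id /\ ~ creduces Id R.

Definition minimal (R : nat -> nat -> Prop) : Prop :=
  inf_classes R /\
  forall S, equiv_rel S -> creduces S R ->
    cequiv S R \/ exists n, 1 <= n /\ cequiv S (Idn n).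

(* Main.v *)
Require Import Defs.
From Stdlib Require Import List Arith Lia Classical IndefiniteDescription.
Import ListNotations.

Lemma e_eq c u y y' : eval c u y -> y = y' -> eval c u y'.
Proof. intros H ->; exact H. Qed.

Lemma e_c1 c a u x y : eval a u x -> eval c [x] y -> eval (CComp c [a]) u y.
Proof. intros Ha Hc. econstructor; [|exact Hc]. repeat constructor; auto. Qed.

Lemma e_c2 c a b u x x' y : eval a u x -> eval b u x' -> eval c [x;x'] y ->
  eval (CComp c [a;b]) u y.
Proof. intros Ha Hb Hc. econstructor; [|exact Hc]. repeat constructor; auto. Qed.

Lemma e_c3 c a b d u x x' x'' y : eval a u x -> eval b u x' -> eval d u x'' ->
  eval c [x;x';x''] y -> eval (CComp c [a;b;d]) u y.
Proof. intros Ha Hb Hd Hc. econstructor; [|exact Hc]. repeat constructor; auto. Qed.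

Lemma e_proj i u : eval (CProj i) u (nth i u 0).
Proof. constructor. Qed.

Fixpoint cconst n := match n with 0 => CZero | S n => CComp CSucc [cconst n] end.
Lemma e_const n u : eval (cconst n) u n.
Proof. induction n; simpl. constructor. eapply e_c1; [exact IHn|]. constructor. Qed.

Definition ADD := CPrim (CProj 0) (CComp CSucc [CProj 1]).
Lemma e_ADD x y : eval ADD [x;y] (x + y).
Proof.
  induction x. apply ev_prim0. apply ev_proj.
  eapply ev_primS. exact IHx. eapply e_c1. apply e_proj. apply ev_succ.
Qed.

Definition MUL := CPrim CZero (CComp ADD [CProj 1; CProj 2]).
Lemma e_MUL x y : eval MUL [x;y] (x * y).
Proof.
  induction x. apply ev_prim0. constructor.
  eapply ev_primS. exact IHx. eapply e_c2. apply e_proj. apply e_proj.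
  eapply e_eq. apply e_ADD. simpl. lia.
Qed.

Definition PRED := CPrim CZero (CProj 0).
Lemma e_PRED x : eval PRED [x] (pred x).
Proof. induction x. apply ev_prim0. constructor.
  eapply ev_primS. exact IHx. apply e_proj. Qed.

Definition SUBc := CPrim (CProj 0) (CComp PRED [CProj 1]).
Lemma e_SUBc x y : eval SUBc [x;y] (y - x).
Proof.
  induction x. eapply e_eq. apply ev_prim0. apply e_proj. simpl; lia.
  eapply ev_primS. exact IHx. eapply e_c1. apply e_proj. eapply e_eq. apply e_PRED. simpl; lia.
Qed.

Definition sg x := match x with 0 => 0 | _ => 1 end.
Definition SG := CPrim CZero (cconst 1).
Lemma e_SG x : eval SG [x] (sg x).
Proof. induction x. apply ev_prim0. constructor.
  eapply ev_primS. exact IHx. apply e_const. Qed.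
Definition NSG := CPrim (cconst 1) CZero.
Lemma e_NSG x : eval NSG [x] (1 - sg x).
Proof. induction x. apply ev_prim0. apply e_const.
  eapply ev_primS. exact IHx. constructor. Qed.

Definition app1 c a := CComp c [a].
Definition app2 c a b := CComp c [a; b].

Definition IFZ t A B := app2 ADD (app2 MUL (app1 NSG t) A) (app2 MUL (app1 SG t) B).
Lemma e_IFZ t A B u x a b : eval t u x -> eval A u a -> eval B u b ->
  eval (IFZ t A B) u (match x with 0 => a | _ => b end).
Proof.
  intros Ht HA HB. unfold IFZ, app1, app2.
  eapply e_c2. eapply e_c2. eapply e_c1. exact Ht. apply e_NSG. exact HA. apply e_MUL.
  eapply e_c2. eapply e_c1. exact Ht. apply e_SG. exact HB. apply e_MUL.
  eapply e_eq. apply e_ADD. destruct x; simpl; lia.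
Qed.

Definition IFEQ e n A B := IFZ (app2 ADD (app2 SUBc (cconst n) e) (app2 SUBc e (cconst n))) A B.
Lemma e_IFEQ e n A B u x a b : eval e u x -> eval A u a -> eval B u b ->
  eval (IFEQ e n A B) u (if Nat.eqb x n then a else b).
Proof.
  intros He HA HB. unfold IFEQ. eapply e_eq. apply e_IFZ; [|exact HA|exact HB].
  unfold app2. eapply e_c2. eapply e_c2. apply e_const. exact He. apply e_SUBc.
  eapply e_c2. exact He. apply e_const. apply e_SUBc. apply e_ADD.
  destruct (Nat.eqb_spec x n). subst. replace (n - n + (n - n)) with 0 by lia. reflexivity.
  destruct (x - n + (n - x)) eqn:E. lia. reflexivity.
Qed.

Fixpoint code_ind' (P : code -> Prop)
  (H0 : P CZero) (H1 : P CSucc) (H2 : forall i, P (CProj i))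
  (H3 : forall f gs, P f -> Forall P gs -> P (CComp f gs))
  (H4 : forall f g, P f -> P g -> P (CPrim f g))
  (H5 : forall f, P f -> P (CMu f)) (c : code) : P c :=
  match c with
  | CZero => H0 | CSucc => H1 | CProj i => H2 i
  | CComp f gs => H3 f gs (code_ind' P H0 H1 H2 H3 H4 H5 f)
      ((fix go l : Forall P l := match l with [] => Forall_nil _
        | g :: l' => Forall_cons _ (code_ind' P H0 H1 H2 H3 H4 H5 g) (go l') end) gs)
  | CPrim f g => H4 f g (code_ind' P H0 H1 H2 H3 H4 H5 f) (code_ind' P H0 H1 H2 H3 H4 H5 g)
  | CMu f => H5 f (code_ind' P H0 H1 H2 H3 H4 H5 f)
  end.

Fixpoint all_some (l : list (option nat)) : option (list nat) :=
  match l with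
  | [] => Some []
  | o :: l' => match o, all_some l' with Some w, Some ws => Some (w :: ws) | _, _ => None end
  end.

Fixpoint prim_iter (b : option nat) (st : nat -> nat -> option nat) (n : nat) : option nat :=
  match n with
  | 0 => b
  | S n' => match prim_iter b st n' with Some z => st n' z | None => None end
  end.

Fixpoint mu_state (F : nat -> option nat) (j : nat) : nat :=
  match j with
  | 0 => 0
  | S j' => match mu_state F j' with
            | 0 => match F j' with None => 1 | Some 0 => S (S j') | Some (S _) => 0 end
            | a => a end
  end.

Fixpoint ev (s : nat) (c : code) (v : list nat) {struct c} : option nat :=
  match c with
  | CZero => Some 0
  | CSucc => Some (S (hd 0 v))
  | CProj i => Some (nth i v 0)
  | CComp f gs => match all_some (map (fun g => ev s g v) gs) with
                  | Some ws => ev s f ws | None => None end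
  | CPrim f g => match v with [] => None
                 | n :: v' => prim_iter (ev s f v') (fun k z => ev s g (k :: z :: v')) n end
  | CMu f => match mu_state (fun m => ev s f (m :: v)) s with S (S m) => Some m | _ => None end
  end.

Lemma mu_state_zero F j : (forall m, m < j -> exists k, F m = Some (S k)) -> mu_state F j = 0.
Proof.
  induction j; intros H; simpl. reflexivity.
  rewrite IHj by (intros; apply H; lia). destruct (H j) as [k Hk]. lia. rewrite Hk. reflexivity.
Qed.

Lemma mu_state_found F j m : m < j -> F m = Some 0 ->
  (forall m', m' < m -> exists k, F m' = Some (S k)) -> mu_state F j = S (S m).
Proof.
  induction j; intros Hl Hm H. lia. simpl.
  destruct (Nat.eq_dec m j). subst. rewrite mu_state_zero by exact H. rewrite Hm. reflexivity.
  rewrite IHj by (auto; lia). reflexivity.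
Qed.

Lemma mu_state_zero_inv F j : mu_state F j = 0 ->
  forall m', m' < j -> exists k, F m' = Some (S k).
Proof.
  induction j; simpl; intros E m' Hm'. lia.
  destruct (mu_state F j) eqn:E'; [|discriminate].
  destruct (F j) as [[|k']|] eqn:Fj'; try discriminate.
  destruct (Nat.eq_dec m' j). subst. eauto. apply IHj; auto. lia.
Qed.

Lemma mu_state_inv F j m : mu_state F j = S (S m) ->
  m < j /\ F m = Some 0 /\ (forall m', m' < m -> exists k, F m' = Some (S k)).
Proof.
  induction j; simpl; intros H. discriminate.
  destruct (mu_state F j) eqn:E.
  - destruct (F j) as [[|k]|] eqn:Fj; try discriminate. injection H as <-.
    split. lia. split. exact Fj. apply mu_state_zero_inv; auto.
  - destruct (IHj H) as [A [B C]]. split. lia. auto.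
Qed.

Lemma all_some_map_mono (A : Type) (l : list A) (F G : A -> option nat) ws :
  (forall a y, In a l -> F a = Some y -> G a = Some y) ->
  all_some (map F l) = Some ws -> all_some (map G l) = Some ws.
Proof.
  revert ws. induction l; simpl; intros ws H E. exact E.
  destruct (F a) eqn:Fa; try discriminate. destruct (all_some (map F l)) eqn:E2; try discriminate.
  rewrite (H a n (or_introl eq_refl) Fa). rewrite (IHl l0); auto.
Qed.

Lemma prim_iter_mono b b' st st' n y :
  (forall z, b = Some z -> b' = Some z) ->
  (forall k z w, st k z = Some w -> st' k z = Some w) ->
  prim_iter b st n = Some y -> prim_iter b' st' n = Some y.
Proof.
  revert y; induction n; simpl; intros y Hb Hst E. auto.
  destruct (prim_iter b st n) eqn:E2; try discriminate.
  rewrite (IHn n0); auto.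
Qed.

Lemma ev_mono c : forall s s' v y, s <= s' -> ev s c v = Some y -> ev s' c v = Some y.
Proof.
  induction c using code_ind'; intros s s' v y Hs E; simpl in *; auto.
  - destruct (all_some (map (fun g => ev s g v) gs)) eqn:E2; try discriminate.
    erewrite all_some_map_mono; [| |exact E2].
    eapply IHc; eauto. intros a y' Ha. rewrite Forall_forall in H. eapply H; eauto.
  - destruct v as [|n v']. discriminate. eapply prim_iter_mono; [| |exact E]; eauto.
  - destruct (mu_state (fun m => ev s c (m :: v)) s) as [|[|m]] eqn:E2; try discriminate.
    injection E as <-. apply mu_state_inv in E2. destruct E2 as [A [B C]].
    rewrite (mu_state_found _ _ m). reflexivity. lia. eauto.
    intros m' Hm'. destruct (C m' Hm') as [k Hk]. eauto.
Qed.

Lemma all_some_evals gs v ws s :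
  Forall (fun g => forall s v y, ev s g v = Some y -> eval g v y) gs ->
  all_some (map (fun g => ev s g v) gs) = Some ws -> evals gs v ws.
Proof.
  revert ws; induction gs; simpl; intros ws HF E. injection E as <-. constructor.
  inversion HF; subst.
  destruct (ev s a v) eqn:E1; try discriminate.
  destruct (all_some (map (fun g => ev s g v) gs)) eqn:E2; try discriminate.
  injection E as <-. constructor; eauto.
Qed.

Lemma ev_sound c : forall s v y, ev s c v = Some y -> eval c v y.
Proof.
  induction c using code_ind'; intros s v y E; simpl in *.
  - injection E as <-. constructor.
  - injection E as <-. constructor.
  - injection E as <-. constructor.
  - destruct (all_some (map (fun g => ev s g v) gs)) eqn:E2; try discriminate.
    econstructor. eapply all_some_evals; eauto. eauto.
  - destruct v as [|n v']. discriminate. revert y E. induction n; simpl; intros y E.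
    constructor. eauto.
    destruct (prim_iter (ev s c1 v') (fun k z => ev s c2 (k :: z :: v')) n) eqn:E2; try discriminate.
    econstructor. apply IHn. reflexivity. eauto.
  - destruct (mu_state (fun m => ev s c (m :: v)) s) as [|[|m]] eqn:E2; try discriminate.
    injection E as <-. apply mu_state_inv in E2. destruct E2 as [A [B C]].
    constructor. eauto. intros m' Hm'. destruct (C m' Hm') as [k Hk]. eauto.
Qed.

Lemma ev_complete c : forall v y, eval c v y -> exists s, ev s c v = Some y.
Proof.
  induction c using code_ind'; intros v y E.
  - inversion E; subst. exists 0; reflexivity.
  - inversion E; subst. exists 0; reflexivity.
  - inversion E; subst. exists 0; reflexivity.
  - inversion E; subst. simpl. destruct (IHc _ _ H5) as [s1 Hs1].
    assert (exists s2, forall s, s2 <= s -> all_some (map (fun g => ev s g v) gs) = Some ws) as [s2 Hs2].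
    { clear H5 E Hs1. induction H2. exists 0. reflexivity.
      inversion H; subst. destruct (IHevals H5) as [s3 Hs3].
      destruct (H4 _ _ H0) as [s4 Hs4]. exists (max s3 s4). intros s Hs. simpl.
      rewrite (ev_mono _ s4 s _ _ ltac:(lia) Hs4). rewrite Hs3 by lia. reflexivity. }
    exists (max s1 s2). rewrite Hs2 by lia. eapply ev_mono; [|exact Hs1]. lia.
  - assert (HP: forall n v0 y, eval (CPrim c1 c2) (n :: v0) y -> exists s,
       prim_iter (ev s c1 v0) (fun k z => ev s c2 (k :: z :: v0)) n = Some y).
    { clear v y E. induction n; intros v0 y0 H0; inversion H0; subst.
      - match goal with H: eval c1 _ _ |- _ => destruct (IHc1 _ _ H) as [s Hs] end.
        exists s. exact Hs.
      - match goal with H: eval (CPrim c1 c2) _ _ |- _ => destruct (IHn _ _ H) as [s1 Hs1] end.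
        match goal with H: eval c2 _ _ |- _ => destruct (IHc2 _ _ H) as [s2 Hs2] end.
        exists (max s1 s2). simpl.
        rewrite (prim_iter_mono _ _ _ _ n _ (fun z0 H => ev_mono _ s1 (max s1 s2) _ _ ltac:(lia) H)
          (fun k z0 w H => ev_mono _ s1 (max s1 s2) _ _ ltac:(lia) H) Hs1).
        eapply ev_mono; [|exact Hs2]. lia. }
    inversion E; subst; exact (HP _ _ _ E).
  - inversion E; subst. simpl. rename H0 into H0', H1 into H2.
    destruct (IHc _ _ H0') as [s0 Hs0].
    assert (exists s1, forall s m, s1 <= s -> m < y -> exists k, ev s c (m :: v) = Some (S k)) as [s1 Hs1].
    { clear E H0' Hs0. induction y. exists 0. intros; lia.
      destruct IHy as [s1 Hs1]. intros; apply H2; lia.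
      destruct (H2 y ltac:(lia)) as [k Hk]. destruct (IHc _ _ Hk) as [s2 Hs2].
      exists (max s1 s2). intros s m Hs Hm. destruct (Nat.eq_dec m y). subst.
      exists k. eapply ev_mono; [|exact Hs2]. lia. apply Hs1; lia. }
    exists (max (max s0 s1) (S y)).
    rewrite (mu_state_found _ _ y). reflexivity. lia.
    eapply ev_mono; [|exact Hs0]. lia. intros; apply Hs1; lia.
Qed.

Definition enc (o : option nat) := match o with None => 0 | Some y => S y end.

Fixpoint projs d k := match k with 0 => [] | S k => CProj d :: projs (S d) k end.
Lemma e_projs w : forall pre d, length pre = d -> evals (projs d (length w)) (pre ++ w) w.
Proof.
  induction w; intros pre d Hl; simpl. constructor.
  constructor. subst d. eapply e_eq. apply e_proj. rewrite nth_middle. reflexivity.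
  replace (pre ++ a :: w) with ((pre ++ [a]) ++ w) by (rewrite <- app_assoc; reflexivity).
  apply IHw. rewrite length_app. simpl. lia.
Qed.

Fixpoint allpos (bs : list code) := match bs with [] => cconst 1
  | b :: bs => app2 MUL (app1 SG b) (allpos bs) end.
Definition pos_all (l : list nat) := fold_right (fun x acc => sg x * acc) 1 l.
Lemma e_allpos bs u vals : evals bs u vals -> eval (allpos bs) u (pos_all vals).
Proof.
  induction 1; simpl. exact (e_const 1 _).
  eapply e_c2. eapply e_c1. exact H. apply e_SG. exact IHevals. apply e_MUL.
Qed.

Lemma evals_map_pred bs u vals : evals bs u vals ->
  evals (map (fun b => app1 PRED b) bs) u (map pred vals).
Proof. induction 1; simpl; constructor; auto. eapply e_c1. exact H. apply e_PRED. Qed.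

Lemma all_some_spec l : match all_some l with
  | Some ws => ws = map (fun o => pred (enc o)) l /\ pos_all (map enc l) = 1 /\ length ws = length l
  | None => pos_all (map enc l) = 0 end.
Proof.
  induction l; simpl. auto.
  destruct a; simpl; [|reflexivity].
  destruct (all_some l) as [ws|]; simpl.
  destruct IHl as [A [B C]]. subst. rewrite B. auto.
  rewrite IHl. lia.
Qed.

Definition Gp bg k' := app2 MUL (app1 SG (CProj 1))
  (CComp bg (CProj 2 :: CProj 0 :: app1 PRED (CProj 1) :: projs 3 k')).

Definition Gm bf k :=
  let b := CComp bf (CProj 2 :: CProj 0 :: projs 3 k) in
  IFZ (CProj 1) (IFZ b (cconst 1) (IFZ (app1 PRED b) (app1 CSucc (app1 CSucc (CProj 0))) CZero)) (CProj 1).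

Fixpoint B (c : code) (k : nat) {struct c} : code :=
 match c with
 | CZero => cconst 1
 | CSucc => app1 CSucc (app1 CSucc (CProj 1))
 | CProj i => app1 CSucc (CProj (S i))
 | CComp f gs => app2 MUL (allpos (map (fun g => B g k) gs))
      (CComp (B f (length gs)) (CProj 0 :: map (fun b => app1 PRED b) (map (fun g => B g k) gs)))
 | CPrim f g => match k with 0 => CZero
      | S k' => CComp (CPrim (B f k') (Gp (B g (S (S k'))) k')) (CProj 1 :: CProj 0 :: projs 2 k') end
 | CMu f => app1 PRED (CComp (CPrim CZero (Gm (B f (S k)) k)) (CProj 0 :: CProj 0 :: projs 1 k))
 end.

Lemma B_ok c : forall k s v, length v = k -> eval (B c k) (s :: v) (enc (ev s c v)).
Proof.
  induction c using code_ind'; intros k s v Hk; simpl.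
  - exact (e_const 1 _).
  - eapply e_c1. eapply e_c1. apply e_proj. apply ev_succ. simpl. destruct v; apply ev_succ.
  - eapply e_c1. apply e_proj. apply ev_succ.
  - assert (HE: evals (map (fun g => B g k) gs) (s :: v) (map enc (map (fun g => ev s g v) gs))).
    { clear IHc. induction H; simpl; constructor; auto. }
    pose proof (all_some_spec (map (fun g => ev s g v) gs)) as Hs.
    unfold app2. eapply e_c2. apply e_allpos. exact HE.
    econstructor. constructor. apply e_proj. apply evals_map_pred. exact HE.
    eapply e_eq. apply IHc. rewrite !length_map. reflexivity. reflexivity.
    destruct (all_some (map (fun g => ev s g v) gs)) as [ws|].
    + destruct Hs as [A [B' C]]. rewrite B'. simpl. assert (map Nat.pred (map enc (map (fun g => ev s g v) gs)) = ws) as ->. { subst ws. rewrite !map_map. reflexivity. }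
      eapply e_eq. apply e_MUL. lia.
    + rewrite Hs. apply e_MUL.
  - destruct k as [|k'].
    + destruct v; [|discriminate]. constructor.
    + destruct v as [|n v']; [discriminate|]. simpl in Hk. injection Hk as Hk.
      econstructor. constructor. apply e_proj. constructor. apply e_proj.
      rewrite <- Hk. apply (e_projs v' [s; n]). reflexivity.
      simpl. induction n; simpl.
      * apply ev_prim0. apply IHc1. assumption.
      * eapply ev_primS. exact IHn. unfold Gp, app2, app1.
        eapply e_c2. eapply e_c1. apply e_proj. apply e_SG.
        econstructor. constructor. apply e_proj. constructor. apply e_proj.
        constructor. eapply e_c1. apply e_proj. apply e_PRED.
        rewrite <- Hk. apply (e_projs v' [n; _; s]). reflexivity.
        apply IHc2. simpl. lia.
        destruct (prim_iter (ev s c1 v') (fun k z => ev s c2 (k :: z :: v')) n); simpl.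
        eapply e_eq. apply e_MUL. lia. apply e_MUL.
  - set (F := fun m => ev s c (m :: v)).
    assert (HI: forall j, eval (CPrim CZero (Gm (B c (S k)) k)) (j :: s :: v) (mu_state F j)).
    { induction j; simpl.
      - apply ev_prim0. constructor.
      - eapply ev_primS. exact IHj. unfold Gm.
        assert (Hb: eval (CComp (B c (S k)) (CProj 2 :: CProj 0 :: projs 3 k)) (j :: mu_state F j :: s :: v) (enc (F j))).
        { econstructor. constructor. apply e_proj. constructor. apply e_proj.
          rewrite <- Hk. apply (e_projs v [j; _; s]). reflexivity.
          apply IHc. simpl. lia. }
        eapply e_eq. apply e_IFZ. apply e_proj. apply e_IFZ. exact Hb. apply e_const.
        apply e_IFZ. eapply e_c1. exact Hb. apply e_PRED. eapply e_c1. eapply e_c1. apply e_proj.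
        apply ev_succ. apply ev_succ. constructor. apply e_proj.
        simpl. destruct (mu_state F j); [|reflexivity].
        destruct (F j) as [[|]|]; reflexivity. }
    eapply e_c1. econstructor. constructor. apply e_proj. constructor. apply e_proj.
    rewrite <- Hk. apply (e_projs v [s]). reflexivity. apply HI.
    eapply e_eq. apply e_PRED. fold F. simpl nth.
    destruct (mu_state F s) as [|[|m]]; reflexivity.
Qed.

Lemma comp_c f g : computable f -> computable g -> computable (fun x => f (g x)).
Proof. intros [cf Hf] [cg Hg]. exists (CComp cf [cg]). intros x. eapply e_c1; eauto. Qed.

Lemma const_c n : computable (fun _ => n).
Proof. exists (cconst n). intros; apply e_const. Qed.

Lemma id_c : computable (fun x => x).
Proof. exists (CProj 0). intros x. apply e_proj. Qed.

Lemma ifeq_c H A B n : computable H -> computable A -> computable B ->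
  computable (fun x => if Nat.eqb (H x) n then A x else B x).
Proof.
  intros [ch Hh] [ca Ha] [cb Hb]. exists (IFEQ ch n ca cb). intros x. apply e_IFEQ; auto.
Qed.

Lemma mod_step j K : K <> 0 ->
  S j mod K = match K - S (j mod K) with 0 => 0 | _ => S (j mod K) end.
Proof.
  intros HK. pose proof (Nat.div_mod j K HK). pose proof (Nat.mod_upper_bound j K HK).
  destruct (K - S (j mod K)) eqn:E.
  - symmetry. apply (Nat.mod_unique _ _ (S (j / K))). lia. rewrite Nat.mul_succ_r. lia.
  - symmetry. apply (Nat.mod_unique _ _ (j / K)). lia. lia.
Qed.

Lemma mod_c K : K <> 0 -> computable (fun x => x mod K).
Proof.
  intros HK.
  exists (CPrim CZero (IFZ (app2 SUBc (app1 CSucc (CProj 1)) (cconst K)) CZero (app1 CSucc (CProj 1)))).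
  induction x. apply ev_prim0. rewrite Nat.Div0.mod_0_l. constructor.
  eapply ev_primS. exact IHx. eapply e_eq. apply e_IFZ.
  eapply e_c2. eapply e_c1. apply e_proj. apply ev_succ. apply e_const. apply e_SUBc.
  constructor. eapply e_c1. apply e_proj. apply ev_succ.
  simpl. rewrite (mod_step x K HK). reflexivity.
Qed.

Lemma iter_c h a : computable h -> computable (fun i => Nat.iter i h a).
Proof.
  intros [ch Hh]. exists (CPrim (cconst a) (CComp ch [CProj 1])).
  induction x. apply ev_prim0. apply e_const.
  eapply ev_primS. exact IHx. eapply e_c1. apply e_proj. apply Hh.
Qed.

Fixpoint bsum (p : nat -> nat) n := match n with 0 => p 0 | S n => bsum p n + p (S n) end.
Lemma bsum_ge p n y : y <= n -> p y <= bsum p n.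
Proof. induction n; simpl; intros H. replace y with 0 by lia. lia.
  destruct (Nat.eq_dec y (S n)). subst. lia. specialize (IHn ltac:(lia)). lia. Qed.
Lemma bsum_zero p n : (forall y, y <= n -> p y = 0) -> bsum p n = 0.
Proof. induction n; simpl; intros H. apply H; lia. rewrite IHn, H; auto. Qed.

Lemma least (p : nat -> nat) N : p N = 0 -> exists n, p n = 0 /\ forall m, m < n -> p m <> 0.
Proof.
  revert N. assert (forall N, (exists m, m <= N /\ p m = 0) -> exists n, p n = 0 /\ forall m, m < n -> p m <> 0).
  { induction N; intros [m [Hm Hp]].
    exists 0. split. replace m with 0 in Hp by lia. auto. intros; lia.
    destruct (classic (exists m, m <= N /\ p m = 0)) as [Hx|Hx]. auto.
    exists m. split. auto. intros m' Hm' Hp'. apply Hx. exists m'. split. lia. auto. }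
  intros N HN. apply (H N). eauto.
Qed.

Lemma mu_total cd v p : (forall m, eval cd (m :: v) (p m)) -> (exists m, p m = 0) ->
  exists n, eval (CMu cd) v n /\ p n = 0.
Proof.
  intros Hc [N HN]. destruct (least p N HN) as [n [H1 H2]]. exists n. split; auto.
  constructor. rewrite <- H1. auto. intros m Hm. exists (pred (p m)).
  specialize (H2 m Hm). specialize (Hc m). destruct (p m). congruence. exact Hc.
Qed.

Lemma search (E : nat -> nat -> Prop) (c : code)
  (hE : forall x y, E x y <-> exists z, eval c [x;y] z) (h : nat -> nat) (ch : code)
  (Hh : forall y, eval ch [y] (h y)) (Hsurj : forall x, exists y, E x (h y)) :
  exists r, computable r /\ forall x, E x (h (r x)).
Proof.
  set (bc := B c 2).
  set (q := fun t x y => sg (enc (ev t c [x; h y]))).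
  assert (HT: forall u es ex ey s x y, eval es u s -> eval ex u x -> eval ey u y ->
     eval (CComp bc [es; ex; app1 ch ey]) u (enc (ev s c [x; h y]))).
  { intros. eapply e_c3; eauto. eapply e_c1; eauto. apply B_ok. reflexivity. }
  set (F1 := app1 SG (CComp bc [CProj 0; CProj 1; app1 ch CZero])).
  set (G1 := app2 ADD (CProj 1) (app1 SG (CComp bc [CProj 2; CProj 3; app1 ch (app1 CSucc (CProj 0))]))).
  set (Test1 := app1 NSG (CComp (CPrim F1 G1) [CProj 0; CProj 0; CProj 1])).
  set (Test2 := app1 NSG (CComp bc [CProj 1; CProj 2; app1 ch (CProj 0)])).
  set (C := CComp (CMu Test2) [CMu Test1; CProj 0]).
  assert (HC: forall x, exists y, eval C [x] y /\ E x (h y)).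
  { intros x.
    assert (H1: forall t, eval Test1 [t; x] (1 - sg (bsum (q t x) t))).
    { intros t. eapply e_c1; [|apply e_NSG]. econstructor.
      constructor. apply e_proj. constructor. apply e_proj. constructor. apply e_proj. constructor.
      assert (forall n, eval (CPrim F1 G1) [n; t; x] (bsum (q t x) n)) as HP by
      (induction n; simpl;
      [ apply ev_prim0; eapply e_c1; [apply HT; [apply e_proj|apply e_proj|constructor] | apply e_SG]
      | eapply ev_primS; [exact IHn|]; eapply e_c2; [apply e_proj| |apply e_ADD];
        eapply e_c1; [|apply e_SG]; apply HT; [apply e_proj|apply e_proj|];
        eapply e_c1; [apply e_proj|apply ev_succ] ]).
      apply HP. }
    destruct (mu_total Test1 [x] _ H1) as [T [HT1 HT2]].
    { destruct (Hsurj x) as [y0 Hy0]. apply hE in Hy0. destruct Hy0 as [z Hz].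
      apply ev_complete in Hz. destruct Hz as [s0 Hs0]. exists (max s0 y0).
      pose proof (bsum_ge (q (max s0 y0) x) (max s0 y0) y0 ltac:(lia)).
      assert (q (max s0 y0) x y0 = 1). { unfold q. rewrite (ev_mono _ s0 (max s0 y0) _ _ ltac:(lia) Hs0). reflexivity. }
      destruct (bsum (q (max s0 y0) x) (max s0 y0)). lia. reflexivity. }
    assert (H2: forall y, eval Test2 [y; T; x] (1 - sg (enc (ev T c [x; h y])))).
    { intros y. eapply e_c1; [|apply e_NSG]. apply HT; [apply e_proj|apply e_proj|apply e_proj]. }
    destruct (mu_total Test2 [T; x] _ H2) as [y [Hy1 Hy2]].
    { destruct (classic (exists y, y <= T /\ q T x y <> 0)) as [[y [_ Hy]]|Hn].
      exists y. unfold q in Hy. destruct (ev T c [x; h y]); simpl in *. reflexivity. congruence.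
      exfalso. rewrite bsum_zero in HT2. simpl in HT2. discriminate.
      intros y0 Hy0. destruct (q T x y0) eqn:Eq. reflexivity. exfalso. apply Hn. exists y0. split. auto. lia. }
    exists y. split. eapply e_c2. exact HT1. apply e_proj. exact Hy1.
    destruct (ev T c [x; h y]) eqn:Ev; simpl in Hy2; [|discriminate].
    apply hE. exists n. eapply ev_sound. exact Ev. }
  exists (fun x => proj1_sig (constructive_indefinite_description _ (HC x))). split.
  exists C. intros x. exact (proj1 (proj2_sig (constructive_indefinite_description _ (HC x)))).
  intros x. exact (proj2 (proj2_sig (constructive_indefinite_description _ (HC x)))).
Qed.

Lemma finQ n : forall S H, equiv_rel S -> computable H -> (forall x, H x < n) ->
  (forall x y, H x = H y -> S x y) ->
  exists K, 1 <= K /\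
   (exists phi, computable phi /\ (forall x, phi x < K) /\ forall x y, S x y <-> phi x = phi y) /\
   (exists psi, computable psi /\ forall i j, S (psi i) (psi j) <-> i mod K = j mod K).
Proof.
  induction n; intros S H HS HH Hlt HHS.
  - specialize (Hlt 0). lia.
  - destruct HS as [Srefl [Ssym Strans]].
    destruct (classic (exists x0, H x0 = n)) as [[x0 Hx0]|Hno].
    2:{ apply (IHn S H); auto. split; auto. intros x. specialize (Hlt x).
        destruct (Nat.eq_dec (H x) n). exfalso; eauto. lia. }
    destruct (classic (exists x1, H x1 < n /\ S x0 x1)) as [[x1 [Hx1 Sx1]]|Hno1].
    + apply (IHn S (fun x => if Nat.eqb (H x) n then H x1 else H x)). split; auto.
      apply ifeq_c; auto. apply const_c.
      intros x. destruct (Nat.eqb_spec (H x) n). auto. specialize (Hlt x). lia.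
      intros x y. assert (forall z, H z = n -> S z x1).
      { intros z Hz. apply Strans with x0. apply HHS. congruence. auto. }
      destruct (Nat.eqb_spec (H x) n), (Nat.eqb_spec (H y) n); intros E.
      * apply HHS; congruence.
      * apply Strans with x1. auto. apply Ssym, HHS; auto.
      * apply Strans with x1. apply HHS; auto. apply Ssym; auto.
      * auto.
    + destruct (classic (exists x1, H x1 < n)) as [[x1 Hx1]|Hno2].
      2:{ exists 1. split. lia.
          assert (Hall: forall x, H x = n). { intros x. specialize (Hlt x).
            destruct (Nat.eq_dec (H x) n). auto. exfalso. apply Hno2. exists x. lia. }
          split. exists (fun _ => 0). split. apply const_c. split. auto.
          intros x y; split; auto. intros _. apply HHS. rewrite !Hall. auto.
          exists (fun _ => 0). split. apply const_c. intros i j. rewrite !Nat.mod_1_r. split; auto. }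
      set (rho := fun x => if Nat.eqb (H x) n then x1 else x).
      assert (Crho: computable rho). { apply ifeq_c; auto. apply const_c. apply id_c. }
      assert (Hrho: forall x, H (rho x) < n).
      { intros x. unfold rho. destruct (Nat.eqb_spec (H x) n). auto. specialize (Hlt x). lia. }
      assert (Hsep: forall z, H z < n -> ~ S x0 z). { intros z Hz Sz. apply Hno1. eauto. }
      destruct (IHn (fun x y => S (rho x) (rho y)) (fun x => H (rho x))) as [K [HK [[phi [Cphi [Hphi1 Hphi2]]] [psi [Cpsi Hpsi]]]]].
      { split. auto. split. auto. intros x y z. apply Strans. }
      { apply comp_c; auto. }
      { auto. }
      { intros x y E. apply HHS. exact E. }
      exists ((Datatypes.S K)). split. lia. split.
      * exists (fun x => if Nat.eqb (H x) n then K else phi x). split.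
        apply ifeq_c; auto. apply const_c.
        split. intros x. destruct (Nat.eqb (H x) n). lia. specialize (Hphi1 x). lia.
        intros x y. destruct (Nat.eqb_spec (H x) n), (Nat.eqb_spec (H y) n).
        -- split; auto. intros _. apply HHS. congruence.
        -- specialize (Hphi1 y). split. 2: lia. intros Sxy. exfalso. apply (Hsep y).
           specialize (Hlt y). lia. apply Strans with x. apply HHS. congruence. auto.
        -- specialize (Hphi1 x). split. 2: lia. intros Sxy. exfalso. apply (Hsep x).
           specialize (Hlt x). lia. apply Strans with y. apply HHS. congruence. auto.
        -- rewrite <- Hphi2. unfold rho. rewrite <- !Nat.eqb_neq in *. rewrite n0, n1. tauto.
      * exists (fun i => if Nat.eqb (i mod (Datatypes.S K)) K then x0 else rho (psi (i mod (Datatypes.S K)))). split.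
        apply ifeq_c. apply mod_c; lia. apply const_c. apply (comp_c rho (fun i => psi (i mod (Datatypes.S K)))). auto.
        apply (comp_c psi (fun i => i mod (Datatypes.S K))); auto. apply mod_c; lia.
        intros i j. pose proof (Nat.mod_upper_bound i ((Datatypes.S K)) ltac:(lia)).
        pose proof (Nat.mod_upper_bound j ((Datatypes.S K)) ltac:(lia)).
        destruct (Nat.eqb_spec (i mod (Datatypes.S K)) K), (Nat.eqb_spec (j mod (Datatypes.S K)) K).
        -- split; auto. intros _. lia.
        -- split. intros Sx. exfalso. apply (Hsep _ (Hrho (psi (j mod (Datatypes.S K))))). auto. lia.
        -- split. intros Sx. exfalso. apply (Hsep _ (Hrho (psi (i mod (Datatypes.S K))))). auto. lia.
        -- rewrite Hpsi. rewrite !(Nat.mod_small _ K) by lia. tauto.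
Qed.

Theorem proposition2 (E R : nat -> nat -> Prop) :
  ceer E -> dark E -> minimal E ->
  equiv_rel R -> inf_classes R -> (forall x y, E x y -> R x y) ->
  minimal R.
Proof.
  intros [[Erefl [Esym Etrans]] [c Hc]] [Hd1 Hd2] [HEinf HEmin] [Rrefl [Rsym Rtrans]] HRinf HER.
  split. exact HRinf.
  intros S HSeq [f [Hf Hred]].
  destruct HSeq as [Srefl [Ssym Strans]].
  set (E' := fun x y => E (f x) (f y)).
  assert (HE'eq: equiv_rel E'). { unfold E'. split. auto. split. auto. intros x y z. apply Etrans. }
  assert (HE'red: creduces E' E). { exists f. split. auto. intros; unfold E'; tauto. }
  destruct (HEmin E' HE'eq HE'red) as [[_ [g [Hg Hg']]] | [n [Hn [[G [HG HG']] _]]]].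
  - set (h := fun y => f (g y)).
    assert (Ch: computable h) by (unfold h; apply (comp_c f g); auto).
    assert (Hsurj: forall x, exists y, E x (h y)).
    { apply NNPP. intros Hno. apply not_all_ex_not in Hno. destruct Hno as [a Ha].
      assert (Ha': forall y, ~ E a (h y)) by (intros y Hy; apply Ha; eauto).
      set (u := fun i => Nat.iter i h a).
      assert (Hu: forall i d, ~ E (u i) (u (i + Datatypes.S d))).
      { induction i; intros d Hx. apply (Ha' (u d)). exact Hx.
        apply (IHi d). apply Hg'. exact Hx. }
      apply Hd2. exists u. split. apply iter_c. auto.
      intros x y. split. intros ->. auto. intros Hx.
      destruct (lt_eq_lt_dec x y) as [[Hl|Hl]|Hl]; auto; exfalso.
      replace y with (x + Datatypes.S (y - x - 1)) in Hx by lia. eapply Hu; eauto.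
      replace x with (y + Datatypes.S (x - y - 1)) in Hx by lia. eapply Hu; eauto. }
    destruct Ch as [ch Hch].
    destruct (search E c Hc h ch Hch Hsurj) as [r' [Cr' Hr']].
    left. split. exists f. split; auto.
    exists (fun x => g (r' x)). split. apply comp_c; auto.
    intros x y. rewrite Hred.
    assert (Hx: R (f (g (r' x))) x) by (apply Rsym, HER, Hr').
    assert (Hy: R (f (g (r' y))) y) by (apply Rsym, HER, Hr').
    split; intros H.
    + apply Rtrans with x; auto. apply Rtrans with y; auto.
    + apply Rtrans with (f (g (r' x))); auto. apply Rtrans with (f (g (r' y))); auto.
  - destruct (finQ n S (fun x => G x mod n)) as [K [HK [[phi [Cphi [Hphi1 Hphi2]]] [psi [Cpsi Hpsi]]]]].
    + split; auto.
    + apply (comp_c (fun x => x mod n) G); auto. apply mod_c. lia.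
    + intros x. apply Nat.mod_upper_bound. lia.
    + intros x y Hxy. apply Hred. apply HER. apply HG'. exact Hxy.
    + right. exists K. split. auto. split.
      * exists phi. split. auto. intros x y. rewrite Hphi2. unfold Idn.
        rewrite !Nat.mod_small by auto. tauto.
      * exists psi. split. auto. intros i j. rewrite Hpsi. unfold Idn. tauto.
Qed.
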